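(* Let $\langle X,\tau\rangle$ be a topological space that is a continuous open image of the Sorgenfrey line, and let $F\subseteq X$ be a nonempty closed subset such that the subspace $\langle F,\tau\upharpoonright F\rangle$ has no isolated points. Then $\langle F,\tau\upharpoonright F\rangle$ is a continuous open image of the Sorgenfrey line.
   Context: The Sorgenfrey line is $\mathbb R$ with topology generated by $\{[a,b)\}$; ''continuous open image'' means image under a continuous open surjection. *)

(* Defs.v *)
From HB Require Import structures.
From mathcomp Require Import all_boot all_order all_algebra.
From mathcomp Require Import all_classical all_reals all_analysis.
Set Implicit Arguments. Unset Strict Implicit. Unset Printing Implicit Defensive.
Import Order.TTheory GRing.Theory Num.Theory.
Local Open Scope classical_set_scope.
Local Open Scope ring_scope.

(* The Sorgenfrey line: the carrier of a real field R with the topology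
   generated by the base of half-open intervals [a, b). *)
Definition sorgenfrey (R : realType) : Type := R.

Section Sorgenfrey.
Variable R : realType.
HB.instance Definition _ := Choice.on (sorgenfrey R).

Definition hoitv (a c : R) : set (sorgenfrey R) := [set x : R | a <= x < c].

Definition sorgenfrey_open : set_system (sorgenfrey R) :=
  [set U | forall x, U x -> exists a c, hoitv a c x /\ hoitv a c `<=` U].

Let sopT : sorgenfrey_open setT.
Proof.
move=> x _; exists x, (x + 1); split => //.
by rewrite /hoitv /= lexx ltrDl ltr01.
Qed.

Let sopI : setI_closed sorgenfrey_open.
Proof.
move=> U V hU hV x [/hU [a1 [c1 [hx1 s1]]] /hV [a2 [c2 [hx2 s2]]]].
move: hx1 hx2; rewrite /hoitv /= => /andP[ha1 hb1] /andP[ha2 hb2].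
exists (Order.max a1 a2), (Order.min c1 c2); split.
  by rewrite /= ge_max lt_min ha1 ha2 hb1 hb2.
move=> s /=; rewrite ge_max lt_min => /andP[/andP[h1 h2] /andP[h3 h4]].
by split; [apply: s1 | apply: s2]; rewrite /hoitv /= ?h1 ?h2 ?h3 ?h4.
Qed.

Let sop_bigU (J : Type) (f : J -> set (sorgenfrey R)) :
  (forall i, sorgenfrey_open (f i)) -> sorgenfrey_open (\bigcup_i f i).
Proof.
move=> hf x [i _ /hf [a [c [hx s]]]]; exists a, c; split => // y /s fy.
by exists i.
Qed.

HB.instance Definition _ := isOpenTopological.Build (sorgenfrey R) sopT sopI sop_bigU.
End Sorgenfrey.

Definition continuous_open_image_sorgenfrey (R : realType) (Y : topologicalType) : Prop :=
  exists f : sorgenfrey R -> Y,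
    [/\ continuous f,
        (forall U : set (sorgenfrey R), open U -> open (f @` U)) &
        (forall y : Y, exists x : sorgenfrey R, f x = y)].

(* Main.v *)
Require Import Defs.
From HB Require Import structures.
From mathcomp Require Import all_boot all_order all_algebra.
From mathcomp Require Import all_classical all_reals all_analysis.
From mathcomp Require Import ring lra.
Import Order.TTheory GRing.Theory Num.Theory.
Local Open Scope classical_set_scope.
Local Open Scope ring_scope.
Set Implicit Arguments. Unset Strict Implicit. Unset Printing Implicit Defensive.
Section Aux.
Variable R : realType.
Lemma halving (x : nat -> R) : (forall n, 0 <= x n) ->
  (forall n, x n.+1 <= x n / 2) -> forall e, 0 < e -> exists n, x n < e.
Proof.
move=> x0 xh e e0.
have hb : forall n, x n * 2 ^+ n <= x 0%N.
  elim=> [|n IH]; first by rewrite expr0 mulr1.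
  rewrite exprS; apply: le_trans IH.
  have h4 : 2 * x n.+1 <= x n by have := xh n; lra.
  have hp : 0 <= 2 ^+ n :> R by rewrite exprn_ge0.
  rewrite mulrA (mulrC (x n.+1)); exact: ler_wpM2r.
set N := (Num.trunc (x 0%N / e)).+1.
exists N.
have hN : x 0%N / e < N%:R by apply: truncnS_gt.
have h2 : N%:R <= 2 ^+ N :> R.
  rewrite -natrX ler_nat; apply: ltnW; exact: ltn_expl.
have hxe : x 0%N < e * 2 ^+ N.
  rewrite ltr_pdivrMr // in hN; apply: (lt_le_trans hN).
  by rewrite mulrC ler_pM2l.
have := hb N => hb'.
have hp : 0 < 2 ^+ N :> R by rewrite exprn_gt0.
rewrite -(ltr_pM2r hp); exact: le_lt_trans hb' hxe.
Qed.
End Aux.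
Section Tree.
Variable R : realType.
Variable C : set R.
Hypothesis Ccl : forall y : R, (forall e : R, 0 < e -> exists c, C c /\ y <= c < y + e) -> C y.
Hypothesis Cni : forall c, C c -> forall e : R, 0 < e -> exists c', C c' /\ c < c' < c + e.

Lemma supub (A : set R) x : has_sup A -> A x -> x <= sup A.
Proof. by move=> h Ax; have := sup_upper_bound h; move=> /(_ x Ax). Qed.

Lemma inflb (A : set R) x : has_lbound A -> A x -> inf A <= x.
Proof. by move=> h Ax; have := ge_inf h; move=> /(_ x Ax). Qed.

Definition Nd (l u : R) := [set c | C c /\ l <= c < u].
Definition wd (l u : R) := sup (Nd l u) - l.
Definition spl (l u : R) := inf [set c | C c /\ l + wd l u / 2 <= c].
Definition good (l u : R) := C l /\ l < u.

Lemma inf_inC (A : set R) : A `<=` C -> A !=set0 -> has_lbound A -> C (inf A).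
Proof.
move=> AC A0 Alb; apply: Ccl => e e0.
have [a Aa ha] := inf_adherent e0 (conj A0 Alb).
exists a; split; first exact: AC.
by rewrite ha andbT; apply: ge_inf.
Qed.

Lemma Nd_sup {l u} : good l u -> has_sup (Nd l u).
Proof.
move=> [Cl lu]; split; first by exists l; split => //; rewrite lexx lu.
by exists u => c [_ /andP[_ /ltW]].
Qed.

Lemma Nd_le {l u c} : good l u -> Nd l u c -> c <= l + wd l u.
Proof.
move=> g Nc; rewrite /wd addrC subrK.
apply: supub; [exact: Nd_sup g | exact: Nc].
Qed.

Lemma wd_gt0 {l u} : good l u -> 0 < wd l u.
Proof.
move=> g; have [Cl lu] := g.
have e0 : 0 < u - l by lra.
have [c' [Cc' /andP[h1 h2]]] := Cni Cl e0.
have : Nd l u c' by split => //; rewrite (ltW h1) /=; lra.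
move/(Nd_le g); lra.
Qed.

Lemma spl_prop {l u} : good l u ->
  [/\ C (spl l u), l < spl l u, spl l u < u & l + wd l u / 2 <= spl l u].
Proof.
move=> g; have [Cl lu] := g; have w0 := wd_gt0 g.
set A := [set c | C c /\ l + wd l u / 2 <= c].
have e0 : 0 < wd l u / 2 by lra.
have [c Nc hc] := sup_adherent e0 (Nd_sup g).
have Ac : A c by split; [case: Nc | rewrite /wd in hc *; lra].
have Alb : has_lbound A by exists (l + wd l u / 2) => x [].
have A0 : A !=set0 by exists c.
have hlb : l + wd l u / 2 <= spl l u by apply: lb_le_inf => // x [].
have hm : spl l u <= c by apply: inflb.
have := Nc => -[_ /andP[_ cu]].
split.
- by apply: inf_inC => // x [].
- lra.
- lra.
- exact: hlb.
Qed.

Lemma good_left {l u} : good l u -> good l (spl l u).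
Proof. by move=> g; have [? ?] := g; have [? ? ? ?] := spl_prop g; split. Qed.

Lemma good_right {l u} : good l u -> good (spl l u) u.
Proof. by move=> g; have [? ? ? ?] := spl_prop g; split. Qed.

Lemma wd_left {l u} : good l u -> wd l (spl l u) <= wd l u / 2.
Proof.
move=> g; have [C1 h1 h2 h3] := spl_prop g; have gl := good_left g.
rewrite {1}/wd.
suff : sup (Nd l (spl l u)) <= l + wd l u / 2 by lra.
apply: ge_sup; first by exists l; split; [case: g | rewrite lexx h1].
move=> x [Cx /andP[lx xm]].
rewrite leNgt; apply/negP => hx.
have : spl l u <= x by apply: inflb; [exists (l + wd l u / 2) => y [] | split => //; lra].
lra.
Qed.

Lemma wd_right {l u} : good l u -> wd (spl l u) u <= wd l u / 2.
Proof.
move=> g; have [C1 h1 h2 h3] := spl_prop g; have gr := good_right g.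
rewrite {1}/wd.
suff : sup (Nd (spl l u) u) <= l + wd l u by lra.
apply: ge_sup; first by exists (spl l u); split => //; rewrite lexx h2.
move=> x [Cx /andP[lx xm]]; apply: Nd_le g _.
split => //; rewrite xm andbT; lra.
Qed.
End Tree.
Section States.
Variable R : realType.
Variable C : set R.
Hypothesis Ccl : forall y : R, (forall e : R, 0 < e -> exists c, C c /\ y <= c < y + e) -> C y.
Hypothesis Cni : forall c, C c -> forall e : R, 0 < e -> exists c', C c' /\ c < c' < c + e.

Record st := St {sa : R; sb : R; sl : R; su : R}.
Definition mid (s : st) := (sa s + sb s) / 2.
Definition sp (s : st) := spl C (sl s) (su s).
Definition child (b : bool) (s : st) :=
  if b then St (sa s) (mid s) (sl s) (sp s) else St (mid s) (sb s) (sp s) (su s).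
Definition seqn (dec : st -> bool) (s0 : st) (n : nat) :=
  iter n (fun s => child (dec s) s) s0.
Definition Inv (s : st) := good C (sl s) (su s) /\ sa s < sb s.
Definition ndw (s : st) := wd C (sl s) (su s).
Definition inN (s : st) (x : R) := Nd C (sl s) (su s) x.

Lemma seqnS dec s0 n : seqn dec s0 n.+1 = child (dec (seqn dec s0 n)) (seqn dec s0 n).
Proof. by []. Qed.

Lemma child_Inv b s : Inv s -> Inv (child b s).
Proof.
move=> [g ab]; case: b; rewrite /child /mid; split => /=.
- exact: good_left.
- lra.
- exact: good_right.
- lra.
Qed.

Lemma seqn_Inv dec s0 n : Inv s0 -> Inv (seqn dec s0 n).
Proof. by move=> h; elim: n => // n IH; rewrite seqnS; apply: child_Inv. Qed.

Lemma child_nest b s : Inv s -> let s' := child b s in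
  [/\ sa s <= sa s', sb s' <= sb s, sl s <= sl s' & su s' <= su s].
Proof.
move=> [g ab]; have [_ h1 h2 _] := spl_prop Ccl Cni g.
case: b; rewrite /child /mid /sp /=; split; lra.
Qed.

Lemma child_len b s : sb (child b s) - sa (child b s) = (sb s - sa s) / 2.
Proof. by case: b; rewrite /child /mid /=; field. Qed.

Lemma child_wd b s : Inv s -> ndw (child b s) <= ndw s / 2.
Proof.
move=> [g ab]; case: b; rewrite /child /ndw /sp /=.
- exact: wd_left.
- exact: wd_right.
Qed.

Lemma seqn_nest dec s0 i k : Inv s0 ->
  let s := seqn dec s0 i in let s' := seqn dec s0 (i + k) in
  [/\ sa s <= sa s', sb s' <= sb s, sl s <= sl s' & su s' <= su s].
Proof.
move=> h0; elim: k => [|k [h1 h2 h3 h4]] /=; first by rewrite addn0 !lexx.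
rewrite addnS seqnS.
have [j1 j2 j3 j4] := child_nest (dec (seqn dec s0 (i + k))) (seqn_Inv dec (i + k) h0).
split; lra.
Qed.

Lemma nest_le dec s0 i j : Inv s0 -> (i <= j)%N ->
  let s := seqn dec s0 i in let s' := seqn dec s0 j in
  [/\ sa s <= sa s', sb s' <= sb s, sl s <= sl s' & su s' <= su s].
Proof. by move=> h0 /subnKC <-; apply: seqn_nest. Qed.

Lemma len_half dec s0 n e : Inv s0 -> 0 < e ->
  exists j, sb (seqn dec s0 (n + j)) - sa (seqn dec s0 (n + j)) < e.
Proof.
move=> h0 e0.
apply: (halving (x := fun j => sb (seqn dec s0 (n + j)) - sa (seqn dec s0 (n + j)))) => //.
- by move=> j; have [_ ?] := seqn_Inv dec (n + j) h0; lra.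
- by move=> j; rewrite addnS seqnS child_len lexx.
Qed.

Lemma wd_half dec s0 n e : Inv s0 -> 0 < e ->
  exists j, ndw (seqn dec s0 (n + j)) < e.
Proof.
move=> h0 e0.
apply: (halving (x := fun j => ndw (seqn dec s0 (n + j)))) => //.
- by move=> j; have [g _] := seqn_Inv dec (n + j) h0; apply/ltW/wd_gt0.
- by move=> j; rewrite addnS seqnS; apply/child_wd/seqn_Inv.
Qed.

Definition tr (s0 : st) (t : R) := seqn (fun s => t < mid s) s0.

Lemma tr_in s0 t n : sa s0 <= t < sb s0 -> sa (tr s0 t n) <= t < sb (tr s0 t n).
Proof.
move=> h; elim: n => // n IH; rewrite /tr seqnS -/(tr s0 t n).
case/andP: IH => i1 i2.
rewrite /child; case: ifP => /= ht; rewrite /mid in ht *; apply/andP; split => //.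
by rewrite leNgt ht.
Qed.

Lemma tr_left s0 t : Inv s0 -> sa s0 <= t < sb s0 ->
  forall n, exists k, (n <= k)%N /\ t < mid (tr s0 t k).
Proof.
move=> h0 ht n.
case: (pselect (exists k, (n <= k)%N /\ t < mid (tr s0 t k))) => // hno.
exfalso.
have hr : forall j, sb (tr s0 t (n + j)) = sb (tr s0 t n).
  elim=> [|j IH]; first by rewrite addn0.
  rewrite addnS /tr seqnS -/(tr s0 t (n + j)).
  rewrite /child; case: ifP => hh; last by [].
  by exfalso; apply: hno; exists (n + j)%N; rewrite leq_addr.
have /andP[_ tb] := tr_in n ht.
have e0 : 0 < sb (tr s0 t n) - t by lra.
have [j hj] := len_half (fun s => t < mid s) n h0 e0.
have := tr_in (n + j) ht; rewrite /tr in hr hj e0 tb *; rewrite hr => /andP[h1 _].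
rewrite hr in hj; lra.
Qed.

Lemma sl_lt_su dec s0 n m : Inv s0 -> sl (seqn dec s0 n) < su (seqn dec s0 m).
Proof.
move=> h0; case: (leqP n m) => hnm.
- have [_ _ h _] := nest_le dec h0 hnm.
  have [[_ g] _] := seqn_Inv dec m h0; lra.
- have [_ _ _ h] := nest_le dec h0 (ltnW hnm).
  have [[_ g] _] := seqn_Inv dec n h0; lra.
Qed.

Definition M (s0 : st) (t : R) := sup [set sl (tr s0 t n) | n in setT].

Lemma M_has_sup s0 t : Inv s0 -> has_sup [set sl (tr s0 t n) | n in setT].
Proof.
move=> h0; split; first by exists (sl (tr s0 t 0)); exists 0%N.
exists (su (tr s0 t 0)) => _ [n _ <-]; apply/ltW; exact: sl_lt_su.
Qed.

Lemma M_ge s0 t n : Inv s0 -> sl (tr s0 t n) <= M s0 t.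
Proof. by move=> h0; apply: supub; [exact: M_has_sup | exists n]. Qed.

Lemma M_le s0 t m : Inv s0 -> M s0 t <= su (tr s0 t m).
Proof.
move=> h0; apply: ge_sup; first by exists (sl (tr s0 t 0)); exists 0%N.
move=> _ [n _ <-]; apply/ltW; exact: sl_lt_su.
Qed.

Lemma tr_leftS s0 t k : t < mid (tr s0 t k) ->
  tr s0 t k.+1 = child true (tr s0 t k).
Proof. by move=> h; rewrite /tr seqnS -/(tr s0 t k) h. Qed.

Lemma M_in s0 t : Inv s0 -> sa s0 <= t < sb s0 -> forall m, inN (tr s0 t m) (M s0 t).
Proof.
move=> h0 ht.
have CM : C (M s0 t).
  apply: Ccl => e e0.
  have [j hj] := wd_half (fun s => t < mid s) 0 h0 e0; rewrite add0n in hj.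
  have [k [jk hk]] := tr_left h0 ht j.
  have hk1 := tr_leftS hk.
  have hI := seqn_Inv (fun s => t < mid s) k h0.
  have [Cm lm mu _] := spl_prop Ccl Cni hI.1.
  have hle := M_le t k.+1 h0; rewrite hk1 /= in hle.
  exists (sp (tr s0 t k)); split => //.
  have hN : inN (tr s0 t j) (sp (tr s0 t k)).
    have [_ _ n3 n4] := nest_le (fun s => t < mid s) h0 jk.
    split => //; rewrite /sp; apply/andP; split; rewrite /tr; lra.
  have gj := (seqn_Inv (fun s => t < mid s) j h0).1.
  have := Nd_le gj hN; have := M_ge t j h0.
  rewrite /ndw in hj; rewrite /sp /tr; lra.
move=> m; split => //; apply/andP; split; first exact: M_ge.
have [k [mk hk]] := tr_left h0 ht m.
have hk1 := tr_leftS hk.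
have hI := seqn_Inv (fun s => t < mid s) k h0.
have [Cm lm mu _] := spl_prop Ccl Cni hI.1.
have hle := M_le t k.+1 h0; rewrite hk1 /= in hle.
have [_ _ _ n4] := nest_le (fun s => t < mid s) h0 mk.
rewrite /sp /tr in hle mu n4 *; lra.
Qed.

Lemma M_uniq s0 t x : Inv s0 -> sa s0 <= t < sb s0 ->
  (forall k, inN (tr s0 t k) x) -> x = M s0 t.
Proof.
move=> h0 ht hx.
have hM := M_in h0 ht.
have key : forall y z k, inN (tr s0 t k) y -> inN (tr s0 t k) z -> y - z <= ndw (tr s0 t k).
  move=> y z k hy hz; have g := (seqn_Inv (fun s => t < mid s) k h0).1.
  have := Nd_le g hy; case: hz => _ /andP[hz _]; rewrite /ndw /tr; lra.
case: (ltgtP x (M s0 t)) => // hxm; exfalso.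
- have e0 : 0 < M s0 t - x by lra.
  have [k hk] := wd_half (fun s => t < mid s) 0 h0 e0; rewrite add0n in hk.
  have := key _ _ k (hM k) (hx k); rewrite /tr in hk *; lra.
- have e0 : 0 < x - M s0 t by lra.
  have [k hk] := wd_half (fun s => t < mid s) 0 h0 e0; rewrite add0n in hk.
  have := key _ _ k (hx k) (hM k); rewrite /tr in hk *; lra.
Qed.

Lemma tr_cyl s0 t t' n : Inv s0 -> sa (tr s0 t n) <= t' < sb (tr s0 t n) ->
  forall k, (k <= n)%N -> tr s0 t' k = tr s0 t k.
Proof.
move=> h0 ht'; elim=> // k IH hk.
have IH' := IH (ltnW hk).
rewrite /tr !seqnS -/(tr s0 t' k) -/(tr s0 t k) IH'.
have [n1 n2 _ _] := nest_le (fun s => t < mid s) h0 hk.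
rewrite /tr seqnS -/(tr s0 t k) in n1 n2.
case/andP: ht' => ht1 ht2.
case htm: (t < mid (tr s0 t k)); rewrite htm /child /= in n1 n2.
- have -> : t' < mid (tr s0 t k) by rewrite /tr /mid in n2 ht2 *; lra.
  by [].
- have -> : (t' < mid (tr s0 t k)) = false.
    by apply/negbTE; rewrite -leNgt; rewrite /tr /mid in n1 ht1 *; lra.
  by [].
Qed.

Lemma tr_mono s0 t t' n : Inv s0 -> t <= t' ->
  tr s0 t n = tr s0 t' n \/ su (tr s0 t n) <= sl (tr s0 t' n).
Proof.
move=> h0 tt'; elim: n => [|n IH]; first by left.
rewrite /tr !seqnS -/(tr s0 t n) -/(tr s0 t' n).
have hI := seqn_Inv (fun s => t < mid s) n h0.
have hI' := seqn_Inv (fun s => t' < mid s) n h0.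
case: IH => [<-|hsep].
- rewrite /child; case h1: (t < _); case h2: (t' < _).
  + by left.
  + by right; rewrite /= lexx.
  + exfalso; move/negbT: h1; rewrite -leNgt => h1; move: h2; rewrite ltNge.
    by move/negP; apply; apply: le_trans h1 tt'.
  + by left.
- right.
  have [_ _ _ a4] := child_nest (t < mid (tr s0 t n)) hI.
  have [_ _ b3 _] := child_nest (t' < mid (tr s0 t' n)) hI'.
  rewrite /tr in a4 b3 hsep *; lra.
Qed.

Lemma M_mono s0 t t' : Inv s0 -> sa s0 <= t < sb s0 -> sa s0 <= t' < sb s0 ->
  t <= t' -> M s0 t <= M s0 t'.
Proof.
move=> h0 ht ht' tt'.
apply: ge_sup; first by exists (sl (tr s0 t 0)); exists 0%N.
move=> _ [n _ <-].
case: (tr_mono n h0 tt') => [->|hsep]; first exact: M_ge.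
have := M_ge t' n h0; have := sl_lt_su (fun s => t < mid s) n n h0.
rewrite /tr in hsep *; lra.
Qed.

Lemma inN_nest dec s0 i j x : Inv s0 -> (i <= j)%N -> inN (seqn dec s0 j) x -> inN (seqn dec s0 i) x.
Proof.
move=> h0 ij [Cx /andP[h1 h2]]; have [_ _ n3 n4] := nest_le dec h0 ij.
split => //; apply/andP; split; lra.
Qed.

Lemma sa_lt_sb dec s0 n m : Inv s0 -> sa (seqn dec s0 n) < sb (seqn dec s0 m).
Proof.
move=> h0; case: (leqP n m) => hnm.
- have [h _ _ _] := nest_le dec h0 hnm.
  have [_ g] := seqn_Inv dec m h0; lra.
- have [_ h _ _] := nest_le dec h0 (ltnW hnm).
  have [_ g] := seqn_Inv dec n h0; lra.
Qed.

Definition dtr (s0 : st) (c : R) := seqn (fun s => c < sp s) s0.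

Lemma dtr_in s0 c n : inN s0 c -> inN (dtr s0 c n) c.
Proof.
move=> h; elim: n => // n [Cc /andP[i1 i2]]; rewrite /dtr seqnS -/(dtr s0 c n).
rewrite /child; case: ifP => /= hc; split => //; apply/andP; split => //.
by rewrite leNgt hc.
Qed.

Lemma dtr_left s0 c : Inv s0 -> inN s0 c ->
  forall n, exists k, (n <= k)%N /\ c < sp (dtr s0 c k).
Proof.
move=> h0 hc n.
case: (pselect (exists k, (n <= k)%N /\ c < sp (dtr s0 c k))) => // hno.
exfalso.
have hr : forall j, su (dtr s0 c (n + j)) = su (dtr s0 c n).
  elim=> [|j IH]; first by rewrite addn0.
  rewrite addnS /dtr seqnS -/(dtr s0 c (n + j)).
  rewrite /child; case: ifP => hh; last by [].
  by exfalso; apply: hno; exists (n + j)%N; rewrite leq_addr.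
have [Cc /andP[c1 c2]] := dtr_in n hc.
have e0 : 0 < su (dtr s0 c n) - c by lra.
have [c' [Cc' /andP[d1 d2]]] := Cni Cc e0.
have e1 : 0 < c' - c by lra.
have [j hj] := wd_half (fun s => c < sp s) n h0 e1.
have [_ /andP[f1 _]] := dtr_in (n + j) hc.
have hI := (seqn_Inv (fun s => c < sp s) (n + j) h0).1.
have hN : inN (dtr s0 c (n + j)) c'.
  split => //; apply/andP; split; rewrite /dtr in hr f1 *; [lra|].
  rewrite hr; rewrite /dtr in d2; lra.
have := Nd_le hI hN; rewrite /ndw /dtr in hj f1 *; lra.
Qed.

Lemma descent s0 c : Inv s0 -> inN s0 c ->
  exists t, [/\ sa s0 <= t < sb s0, M s0 t = c & forall k, tr s0 t k = dtr s0 c k].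
Proof.
move=> h0 hc.
set T := [set sa (dtr s0 c n) | n in setT].
have hT : has_sup T.
  split; first by exists (sa (dtr s0 c 0)); exists 0%N.
  exists (sb (dtr s0 c 0)) => _ [n _ <-]; apply/ltW; exact: sa_lt_sb.
have tin : forall k, sa (dtr s0 c k) <= sup T < sb (dtr s0 c k).
  move=> k; apply/andP; split; first by apply: supub => //; exists k.
  have [j [kj hj]] := dtr_left h0 hc k.
  have hle : sup T <= sb (dtr s0 c j.+1).
    apply: ge_sup; first by exists (sa (dtr s0 c 0)); exists 0%N.
    move=> _ [n _ <-]; apply/ltW; exact: sa_lt_sb.
  have hj1 : sb (dtr s0 c j.+1) = mid (dtr s0 c j).
    by rewrite /dtr seqnS -/(dtr s0 c j) hj.
  have [_ ab] := seqn_Inv (fun s => c < sp s) j h0.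
  have [_ n2 _ _] := nest_le (fun s => c < sp s) h0 kj.
  rewrite hj1 /mid /dtr in hle ab n2 *; lra.
have heq : forall k, tr s0 (sup T) k = dtr s0 c k.
  elim=> // k IH.
  rewrite /tr seqnS -/(tr s0 (sup T) k) IH /dtr seqnS -/(dtr s0 c k).
  have := tin k.+1; rewrite /dtr seqnS -/(dtr s0 c k).
  case hck: (c < sp (dtr s0 c k)); rewrite /child /= => /andP[t1 t2].
  - by rewrite t2.
  - have -> : (sup T < mid (dtr s0 c k)) = false by apply/negbTE; rewrite -leNgt.
    by [].
have t0 := tin 0%N; rewrite /= in t0.
exists (sup T); split => //.
apply/esym/M_uniq => // k; rewrite heq; exact: dtr_in.
Qed.

Lemma tr_shift s0 t n k : tr s0 t (k + n) = tr (tr s0 t n) t k.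
Proof. by rewrite /tr /seqn iterD. Qed.

Lemma M_cont s0 t e : Inv s0 -> sa s0 <= t < sb s0 -> 0 < e ->
  exists2 d, 0 < d & forall t', t <= t' < t + d ->
    t' < sb s0 /\ M s0 t <= M s0 t' < M s0 t + e.
Proof.
move=> h0 ht e0.
have [n hn] := wd_half (fun s => t < mid s) 0 h0 e0; rewrite add0n in hn.
have /andP[i1 i2] := tr_in n ht.
exists (sb (tr s0 t n) - t); first by lra.
move=> t' /andP[t1 t2].
have [a1 a2 _ _] := nest_le (fun s => t < mid s) h0 (leq0n n).
rewrite /= in a1 a2.
have ht'n : sa (tr s0 t n) <= t' < sb (tr s0 t n) by apply/andP; split; rewrite /tr in i1 t2 *; lra.
have ht' : sa s0 <= t' < sb s0 by apply/andP; split; rewrite /tr in i1 a1 a2 t2 *; lra.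
split; first by rewrite /tr in a2 t2 *; lra.
apply/andP; split; first exact: M_mono.
have hc := tr_cyl h0 ht'n (leqnn n).
have := M_in h0 ht' n; rewrite hc => hin.
have g := (seqn_Inv (fun s => t < mid s) n h0).1.
have := Nd_le g hin; have := M_ge t n h0.
rewrite /ndw /tr in hn *; lra.
Qed.

Lemma M_open s0 t d : Inv s0 -> sa s0 <= t < sb s0 -> 0 < d ->
  exists2 eta, 0 < eta & forall c, C c -> M s0 t <= c < M s0 t + eta ->
    exists t', [/\ t <= t' < t + d, t' < sb s0 & M s0 t' = c].
Proof.
move=> h0 ht d0.
have [n hn] := len_half (fun s => t < mid s) 0 h0 d0; rewrite add0n in hn.
have hMn := M_in h0 ht n.
case: (hMn) => _ /andP[m1 m2].
exists (su (tr s0 t n) - M s0 t); first by lra.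
move=> c Cc /andP[c1 c2].
set s := tr s0 t n.
have hs : Inv s := seqn_Inv _ n h0.
have hcs : inN s c by split => //; apply/andP; split; rewrite /s; lra.
have [t'' [/andP[u1 u2] hMc htr]] := descent hs hcs.
have ht''n : sa (tr s0 t n) <= t'' < sb (tr s0 t n) by apply/andP; split.
have hcyl := tr_cyl h0 ht''n (leqnn n).
have [a1 a2 _ _] := nest_le (fun s => t < mid s) h0 (leq0n n).
rewrite /= in a1 a2.
have ht'' : sa s0 <= t'' < sb s0 by apply/andP; split; rewrite /s /tr in u1 u2 a1 a2 *; lra.
have hM : M s0 t'' = c.
  apply/esym/M_uniq => // j.
  case: (leqP j n) => hjn.
  - apply: (inN_nest (dec := fun s => t'' < mid s) h0 hjn).
    rewrite -/(tr s0 t'' n) hcyl; exact: hcs.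
  - rewrite -(subnK (ltnW hjn)) tr_shift hcyl -/s htr; exact: dtr_in.
case: (leP t t'') => htt.
- exists t''; split => //; last by rewrite /s /tr in u2 a2 *; lra.
  apply/andP; split => //; rewrite /s /tr in u2 hn *.
  have := tr_in n ht; rewrite /tr => /andP[v1 v2]; lra.
- exists t; split => //; first by apply/andP; split; [rewrite lexx | lra].
  + by case/andP: ht.
  + have := M_mono h0 ht'' ht (ltW htt); rewrite hM => h; apply/eqP; rewrite eq_le h c1.
    done.
Qed.
End States.
Section Global.
Variable R : realType.
Variable C : set R.
Hypothesis Ccl : forall y : R, (forall e : R, 0 < e -> exists c, C c /\ y <= c < y + e) -> C y.
Hypothesis Cni : forall c, C c -> forall e : R, 0 < e -> exists c', C c' /\ c < c' < c + e.
Variable c0 : R.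
Hypothesis Cc0 : C c0.

Definition Pk (k : int) := exists c : R, C c /\ k%:~R <= c < k%:~R + 1.
Definition pl (k : int) : R :=
  if pselect (Pk k) then inf [set c | C c /\ k%:~R <= c] else c0.
Definition pu (k : int) : R := if pselect (Pk k) then k%:~R + 1 else c0 + 1.
Definition s0k (k : int) := St 0 1 (pl k) (pu k).

Lemma pl_prop k : Pk k -> C (pl k) /\ k%:~R <= pl k < k%:~R + 1.
Proof.
move=> hk; rewrite /pl; case: pselect => // hh.
have [c [Cc /andP[c1 c2]]] := hk.
have hlb : has_lbound [set c | C c /\ k%:~R <= c] by exists k%:~R => x [].
have hne : [set c | C c /\ k%:~R <= c] !=set0 by exists c.
split; first by apply: inf_inC => // x [].
apply/andP; split; first by apply: lb_le_inf => // x [].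
apply: le_lt_trans c2; exact: inflb.
Qed.

Lemma s0k_Inv k : Inv C (s0k k).
Proof.
rewrite /Inv /s0k /=; split; last exact: ltr01.
rewrite /pu; case: pselect => hk.
- have [h1 /andP[_ h2]] := pl_prop hk; by split.
- rewrite /pl; case: pselect => [hh|hh]; first by exfalso.
  split => //=; lra.
Qed.

Lemma floor_eq (k : int) (y : R) : k%:~R <= y < k%:~R + 1 -> Num.floor y = k.
Proof.
move=> /andP[h1 h2]; apply/eqP; rewrite eq_le; apply/andP; split.
- have : Num.floor y < k + 1.
    by rewrite floor_lt_int rmorphD /=.
  by rewrite ltzD1.
- by rewrite floor_ge_int.
Qed.

Definition gmap (x : R) : R :=
  M C (s0k (Num.floor x)) (x - (Num.floor x)%:~R).

Lemma frac_in (x : R) : 0 <= x - (Num.floor x)%:~R < 1.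
Proof.
apply/andP; split; first by rewrite subr_ge0 floor_le.
have := floorD1_gt x; rewrite rmorphD /=; lra.
Qed.

Lemma gmap_C x : C (gmap x).
Proof.
have [h _] := M_in Ccl Cni (s0k_Inv (Num.floor x)) (frac_in x) 0.
exact: h.
Qed.

Lemma gmap_cont x e : 0 < e -> exists2 d, 0 < d &
  forall y, x <= y < x + d -> gmap x <= gmap y < gmap x + e.
Proof.
move=> e0; set k := Num.floor x.
have [d d0 hd] := M_cont Ccl Cni (s0k_Inv k) (frac_in x) e0.
exists d => // y /andP[y1 y2].
have ht : x - k%:~R <= y - k%:~R < x - k%:~R + d by apply/andP; split; lra.
have [hy1 hy2] := hd _ ht.
have fy : Num.floor y = k.
  apply: floor_eq; rewrite /s0k /= in hy1; have := frac_in x; rewrite -/k.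
  move=> /andP[f1 f2]; apply/andP; split; lra.
by rewrite /gmap fy.
Qed.

Lemma gmap_open x d : 0 < d -> exists2 eta, 0 < eta &
  forall c, C c -> gmap x <= c < gmap x + eta -> exists y, x <= y < x + d /\ gmap y = c.
Proof.
move=> d0; set k := Num.floor x.
have [eta e0 he] := M_open Ccl Cni (s0k_Inv k) (frac_in x) d0.
exists eta => // c Cc hc.
have [t' [/andP[t1 t2] t3 t4]] := he c Cc hc.
rewrite /s0k /= in t3.
have fx := frac_in x; rewrite -/k in fx; case/andP: fx => f1 f2.
exists (k%:~R + t'); split; first by apply/andP; split; lra.
have fy : Num.floor (k%:~R + t') = k by apply: floor_eq; apply/andP; split; lra.
by rewrite /gmap fy addrAC subrr add0r.
Qed.

Lemma gmap_surj c : C c -> exists x, gmap x = c.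
Proof.
move=> Cc; set k := Num.floor c.
have fc := frac_in c; rewrite -/k in fc; case/andP: fc => f1 f2.
have hk : Pk k by exists c; split => //; apply/andP; split; lra.
have hin : inN C (s0k k) c.
  have [h1 /andP[h2 h3]] := pl_prop hk.
  split => //; rewrite /s0k /pl /pu /=; case: pselect => [hh|hh]; last by exfalso; apply: hh.
  rewrite /=; apply/andP; split.
  + by apply: inflb; [exists k%:~R => y [] | split => //; lra].
  + lra.
have [t [/andP[t1 t2] tM _]] := descent Ccl Cni (s0k_Inv k) hin.
rewrite /s0k /= in t1 t2.
exists (k%:~R + t).
have fy : Num.floor (k%:~R + t) = k by apply: floor_eq; apply/andP; split; lra.
by rewrite /gmap fy addrAC subrr add0r.
Qed.
End Global.

Lemma sig_eq (X : Type) (F : set X) (p q : set_type F) : set_val p = set_val q -> p = q.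
Proof.
case: p => [pv pp]; case: q => [qv qp] /=; rewrite set_valE /= => e.
subst qv; congr exist; exact: Prop_irrelevance.
Qed.

Lemma hoitv_open (R : realType) (a b : R) : open (hoitv a b : set (sorgenfrey R)).
Proof. by change (sorgenfrey_open (hoitv a b)) => x hx; exists a, b; split. Qed.

Unset Implicit Arguments.
Theorem mainTheorem16 (R : realType) (X : topologicalType) (F : set X) :
  continuous_open_image_sorgenfrey R X ->
  F !=set0 ->
  closed F ->
  (forall x : set_type F, ~ open [set x]) ->
  continuous_open_image_sorgenfrey R (set_type F).
Proof.
move=> [f [fc fo fs]] [z Fz] clF noiso.
set C : set R := (fun x : R => F (f x)).
have fcP := (continuousP f).1 fc.
have Ccl : forall y : R, (forall e : R, 0 < e -> exists c, C c /\ y <= c < y + e) -> C y.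
  move=> y hy; case: (pselect (C y)) => // nCy; exfalso.
  have oc : open (f @^-1` (~` F)) by apply: fcP; exact: closed_openC.
  have [a [c [/andP[ay yc] sub]]] := oc y nCy.
  have e0 : 0 < c - y by rewrite subr_gt0.
  have [c' [Cc' /andP[h1 h2]]] := hy _ e0.
  have : hoitv a c c' by rewrite /hoitv /=; apply/andP; split; lra.
  by move/sub.
have Cni : forall c, C c -> forall e : R, 0 < e -> exists c', C c' /\ c < c' < c + e.
  move=> c Cc e e0.
  case: (pselect (exists c', C c' /\ c < c' < c + e)) => // hno; exfalso.
  have Fc : f c \in F by apply/mem_set.
  apply: (noiso (exist _ (f c) Fc)).
  exists (f @` (hoitv c (c + e))); first by apply: fo; apply: hoitv_open.
  apply/seteqP; split => q /=.
  - case=> u /andP[u1 u2] fuq.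
    have Cu : C u by rewrite /C fuq set_valE; exact: set_valP.
    case: (ltgtP c u) => hcu.
    + by exfalso; apply: hno; exists u; split => //; apply/andP; split.
    + by move: hcu; rewrite ltNge u1.
    + apply: sig_eq; rewrite -fuq -hcu /=; by rewrite set_valE.
  - move=> ->; exists c; first by rewrite /hoitv /= lexx /=; lra.
    by rewrite set_valE.
have [x0 fx0] := fs z.
have Cx0 : C x0 by rewrite /C fx0.
pose g := gmap C x0.
have gC : forall x, F (f (g x)) := fun x => gmap_C Ccl Cni Cx0 x.
pose G := fun x : sorgenfrey R => (exist _ (f (g x)) (mem_set (gC x)) : set_type F).
have valG : forall x, set_val (G x) = f (g x) by move=> x; rewrite set_valE.
exists G; split.
- apply/continuousP => A [B oB <-].
  change (sorgenfrey_open (G @^-1` (set_val @^-1` B))) => x /=; rewrite valG => hx.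
  have [a [c [/andP[h1 h2] hs]]] := fcP B oB (g x) hx.
  have e0 : 0 < c - g x by rewrite subr_gt0.
  have [d d0 hd] := gmap_cont Ccl Cni Cx0 x e0.
  exists x, (x + d); split; first by rewrite /hoitv /= lexx ltrDl d0.
  move=> y /hd /andP[k1 k2]; rewrite /= valG; apply: hs.
  rewrite /hoitv /=; apply/andP; split; [exact: le_trans k1|].
  by move: k2; rewrite (addrC (g x)) subrK.
- move=> U oU.
  pose O := [set w : sorgenfrey R | exists x, U x /\ exists eta : R, [/\ 0 < eta, g x <= w < g x + eta &
     forall c, C c -> g x <= c < g x + eta -> exists y, U y /\ g y = c]].
  have oO : open O.
    change (sorgenfrey_open O) => w [x [Ux [eta [e0 /andP[w1 w2] hc]]]].
    exists w, (g x + eta); split; first by rewrite /hoitv /= lexx w2.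
    move=> v /andP[v1 v2]; exists x; split => //; exists eta; split => //.
    by apply/andP; split => //; apply: le_trans v1.
  exists (f @` O); first exact: fo.
  apply/seteqP; split => q /=.
  - move=> [ww [x [Ux [eta [e0 oo hc]]]] foq]; case/andP: oo => o1 o2.
    have Co : C ww by rewrite /C foq set_valE; exact: set_valP.
    have [y [Uy gy]] := hc ww Co (ltac:(by apply/andP; split)).
    exists y => //; apply: sig_eq; rewrite valG gy foq //.
  - case=> x Ux <-; rewrite valG.
    have := oU x Ux => -[a [c [/andP[a1 a2] hs]]].
    have d0 : 0 < c - x by rewrite subr_gt0.
    have [eta e0 he] := gmap_open Ccl Cni Cx0 x d0.
    exists (g x) => //; exists x; split => //; exists eta; split => //.
    + by rewrite lexx ltrDl e0.
    + move=> c' Cc' hc'; have [y [/andP[y1 y2] gy]] := he c' Cc' hc'.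
      exists y; split => //; apply: hs; rewrite /hoitv /=; apply/andP; split; [exact: le_trans y1|].
      by move: y2; rewrite (addrC x) subrK.
- move=> q.
  have [x1 fx1] := fs (set_val q).
  have Cx1 : C x1 by rewrite /C fx1 set_valE; exact: set_valP.
  have [x gx] := gmap_surj Ccl Cni Cx0 Cx1.
  exists x; apply: sig_eq; rewrite valG /g gx fx1 //.
Qed.
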